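(* Let $X=X_F\uplus X_H$ be a set of $n\ge1$ clocks, $M\in\mathbb{N}$, and let $v_1,v_2$ be valuations with $v_1\sim_M v_2$. Let $L=\{x\in X\mid -M\le v_1(x)\}$. Then there is a valuation $v_2'$ such that $v_2'\!\downarrow_L=v_2\!\downarrow_L$ and $v_1\approx_M v_2'$.
   Context: $X_F$ are future clocks, $X_H$ history clocks. $\overline{\mathbb{R}}=\mathbb{R}\cup\{\pm\infty\}$ with $(+\infty)+\alpha=+\infty$, $(-\infty)+\beta=-\infty$ for $\beta\ne+\infty$, $-(\pm\infty)=\mp\infty$. A valuation $v:X\cup\{0\}\to\overline{\mathbb{R}}$ has $v(0)=0$, $v(x)\in\mathbb{R}_{\ge0}\cup\{+\infty\}$ for $x\in X_H$, $v(x)\in\mathbb{R}_{\le0}\cup\{-\infty\}$ for $x\in X_F$; $v\!\downarrow_L$ is the restriction of $v$ to $L$; $v\models x-y\triangleleft c$ iff $v(x)-v(y)\triangleleft c$. For $\alpha\in\mathbb{R}$, $\{\alpha\}=\alpha-\lfloor\alpha\rfloor$. $\sim$: for $K\in\mathbb{N}$, $\alpha\sim_K\beta$ iff $\alpha\triangleleft c\iff\beta\triangleleft c$ for all ${\triangleleft}\in\{<,\le\}$ and $c\in\{\pm\infty\}$ or $c\in\mathbb{Z}$ with $|c|\le K$; $v_1\sim_M v_2$ iff $v_1(x)\sim_{nM}v_2(x)$ for all $x\in X$ and $v_1(x)-v_1(y)\sim_{(n+1)M}v_2(x)-v_2(y)$ for all $x,y\in X$, with $n=|X|$. $\approx$: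 $v_1\approx_M v_2$ iff for all clocks $x,y$: (1) $v_1(x)\triangleleft c\iff v_2(x)\triangleleft c$ for ${\triangleleft}\in\{<,\le\}$ and $c\in\{\pm\infty\}$ or $c\in\mathbb{Z}$ with $c\le M$; (2) $v_1\models x-y\triangleleft c\iff v_2\models x-y\triangleleft c$ for ${\triangleleft}\in\{<,\le\}$ and $c\in\{\pm\infty\}$ or $c\in\mathbb{Z}$ with $|c|\le M$; (3) if $-\infty<v_1(x),v_1(y)\le M$ then $\{v_1(x)\}\le\{v_1(y)\}\iff\{v_2(x)\}\le\{v_2(y)\}$. *)

(* Defs.v *)
From HB Require Import structures.
From mathcomp Require Import all_boot all_order all_algebra.
From mathcomp Require Import all_classical all_reals.
From mathcomp Require Import constructive_ereal.
Set Implicit Arguments. Unset Strict Implicit. Unset Printing Implicit Defensive.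
Import Order.TTheory GRing.Theory Num.Theory.
Local Open Scope ring_scope.
Local Open Scope ereal_scope.

Section Defs.
Variable R : realType.

Definition xadd (a b : \bar R) : \bar R :=
  match a, b with
  | +oo, _ => +oo
  | _, +oo => +oo
  | -oo, _ => -oo
  | _, -oo => -oo
  | r%:E, s%:E => (r + s)%:E
  end.

Definition xsub (a b : \bar R) : \bar R := xadd a (- b).

Definition frac (a : R) : R := (a - (Num.floor a)%:~R)%R.

(* Clocks: a finite type X; isF x means x is a future clock (x in X_F),
   otherwise x is a history clock (x in X_H).  The special clock 0 is not
   in X; v(0) = 0 is implicit. *)
Definition valuation (X : finType) (isF : pred X) (v : X -> \bar R) : Prop :=
  forall x, if isF x then v x <= 0 else 0 <= v x.

Definition thr_abs (K : nat) (c : \bar R) : Prop :=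
  c = +oo \/ c = -oo \/ exists z : int, c = (z%:~R)%:E /\ (`|z| <= K%:Z)%R.

Definition thr_up (M : nat) (c : \bar R) : Prop :=
  c = +oo \/ c = -oo \/ exists z : int, c = (z%:~R)%:E /\ (z <= M%:Z)%R.

Definition simK (K : nat) (a b : \bar R) : Prop :=
  forall c, thr_abs K c -> (a < c) = (b < c) /\ (a <= c) = (b <= c).

Definition simM (X : finType) (M : nat) (v1 v2 : X -> \bar R) : Prop :=
  (forall x, simK (#|X| * M) (v1 x) (v2 x)) /\
  (forall x y, simK (#|X|.+1 * M) (xsub (v1 x) (v1 y)) (xsub (v2 x) (v2 y))).

Definition approxM (X : finType) (M : nat) (v1 v2 : X -> \bar R) : Prop :=
  forall x y : X,
    (forall c, thr_up M c ->
       (v1 x < c) = (v2 x < c) /\ (v1 x <= c) = (v2 x <= c)) /\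
    (forall c, thr_abs M c ->
       (xsub (v1 x) (v1 y) < c) = (xsub (v2 x) (v2 y) < c) /\
       (xsub (v1 x) (v1 y) <= c) = (xsub (v2 x) (v2 y) <= c)) /\
    (-oo < v1 x -> v1 x <= (M%:R)%:E -> -oo < v1 y -> v1 y <= (M%:R)%:E ->
       (frac (fine (v1 x)) <= frac (fine (v1 y)))%R =
       (frac (fine (v2 x)) <= frac (fine (v2 y)))%R).

End Defs.

(* Main.v *)
Require Import Defs.
From HB Require Import structures.
From mathcomp Require Import all_boot all_order all_algebra.
From mathcomp Require Import all_classical all_reals.
From mathcomp Require Import constructive_ereal.
From mathcomp Require Import ring lra.
Import Order.TTheory GRing.Theory Num.Theory.
Local Open Scope ring_scope.
Local Open Scope ereal_scope.
Set Implicit Arguments. Unset Strict Implicit. Unset Printing Implicit Defensive.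
Section Gen.
Variable R : realType.
Local Notation frac := (@Defs.frac R).
Local Open Scope ring_scope.

Lemma frac_ge0 (a : R) : 0 <= frac a.
Proof. by rewrite /frac subr_ge0 floor_le. Qed.

Lemma frac_lt1 (a : R) : frac a < 1.
Proof. have := floorD1_gt a; rewrite intrD1 /frac; lra. Qed.

Lemma frac_dec (a : R) : a = (Num.floor a)%:~R + frac a.
Proof. by rewrite /frac addrC subrK. Qed.

Lemma cmp_int (k c : int) (f : R) : 0 <= f -> f < 1 ->
  (k%:~R + f < c%:~R) = (k < c)%R /\
  (k%:~R + f <= c%:~R) = ((k < c)%R || ((k == c) && (f == 0))).
Proof.
move=> f0 f1.
case: (ltgtP k c) => [kc|kc|->].
- have : ((k + 1)%:~R <= (c%:~R : R)) by rewrite ler_int lezD1.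
  rewrite intrD1 => h /=; split; lra.
- have : ((c + 1)%:~R <= (k%:~R : R)) by rewrite ler_int lezD1.
  rewrite intrD1 => h /=; split; apply/negbTE; apply/negP; lra.
- rewrite /=; split; first by apply/negbTE; apply/negP; lra.
  apply/idP/idP => [h|/eqP->]; last by lra.
  by apply/eqP; lra.
Qed.

Lemma cmp_diff (ka kb c : int) (fa fb : R) : 0 <= fa -> fa < 1 -> 0 <= fb -> fb < 1 ->
  ((ka%:~R + fa) - (kb%:~R + fb) < c%:~R) =
     ((ka - kb < c)%R || ((ka - kb == c) && (fa < fb))) /\
  ((ka%:~R + fa) - (kb%:~R + fb) <= c%:~R) =
     ((ka - kb < c)%R || ((ka - kb == c) && (fa <= fb))).
Proof.
move=> a0 a1 b0 b1.
have E : (ka%:~R + fa) - (kb%:~R + fb) = (ka - kb)%:~R + (fa - fb) :> R.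
  by rewrite intrB; ring.
rewrite E; set d := ka - kb.
case: (ltgtP d c) => [kc|kc|->].
- have : ((d + 1)%:~R <= (c%:~R : R)) by rewrite ler_int lezD1.
  rewrite intrD1 => h /=; split; lra.
- have : ((c + 1)%:~R <= (d%:~R : R)) by rewrite ler_int lezD1.
  rewrite intrD1 => h /=; split; apply/negbTE; apply/negP; lra.
- rewrite /=; split; apply/idP/idP => h; lra.
Qed.

End Gen.

Section Step.
Variable R : realType.
Local Notation frac := (@Defs.frac R).
Local Open Scope ring_scope.
Variable X : finType.
Variable p : X -> R.

Definition Inv (w : X -> R) (D : pred X) : Prop :=
  (forall z, D z -> Num.floor (w z) = Num.floor (p z) /\
                    (frac (w z) == 0) = (frac (p z) == 0)) /\
  (forall y z, D y -> D z -> (frac (p y) <= frac (p z)) = (frac (w y) <= frac (w z))).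

Lemma step_t (w : X -> R) (D : pred X) (z : X) : Inv w D ->
  exists t : R, [/\ 0 <= t, t < 1, (frac (p z) == 0) = (t == 0) &
    forall y, D y -> (frac (p y) <= frac (p z)) = (frac (w y) <= t) /\
                     (frac (p z) <= frac (p y)) = (t <= frac (w y))].
Proof.
move=> [I1 I2].
case: (boolP [exists y, D y && (frac (p y) == frac (p z))]).
  case/existsP => y /andP [Dy /eqP e].
  exists (frac (w y)); split.
  - exact: frac_ge0.
  - exact: frac_lt1.
  - by rewrite -e (I1 y Dy).2.
  - by move=> y' Dy'; rewrite -e !I2.
rewrite negb_exists => /forallP ne.
have neq : forall y, D y -> frac (p y) != frac (p z).
  by move=> y Dy; have := ne y; rewrite Dy.
case: (boolP (frac (p z) == 0)) => [/eqP z0|z0].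
  exists 0; split => //; first by rewrite ?z0 eqxx.
  move=> y Dy; have := neq y Dy; rewrite z0 => ny.
  have py0 : 0 < frac (p y) by rewrite lt0r ny frac_ge0.
  have wy0 : 0 < frac (w y).
    by rewrite lt0r frac_ge0 andbT (I1 y Dy).2.
  by split; [rewrite !leNgt py0 wy0 | rewrite (ltW py0) (ltW wy0)].
have pz0 : 0 < frac (p z) by rewrite lt0r z0 frac_ge0.
pose PA := [pred y | D y && (frac (p y) < frac (p z))].
pose PB := [pred y | D y && (frac (p z) < frac (p y))].
pose a := \big[Order.max/0]_(y | PA y) frac (w y).
pose b := \big[Order.min/1]_(y | PB y) frac (w y).
have wlt : forall y y', PA y -> PB y' -> frac (w y) < frac (w y').
  move=> y y' /andP [Dy hy] /andP [Dy' hy'].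
  have : (frac (p y') <= frac (p y)) = false.
    by apply/negbTE; rewrite -ltNge; exact: lt_trans hy hy'.
  by rewrite I2 // => /negbT; rewrite -ltNge.
have wB0 : forall y', PB y' -> 0 < frac (w y').
  move=> y' /andP [Dy' hy'].
  rewrite lt0r frac_ge0 andbT (I1 y' Dy').2.
  by rewrite gt_eqF // (lt_trans pz0 hy').
have b0 : 0 < b by apply: lt_bigmin => //; exact: ltr01.
have ab : a < b.
  apply: bigmax_lt => // y PAy; apply: lt_bigmin => //; first exact: frac_lt1.
  by move=> y' PBy'; exact: wlt.
have a0 : 0 <= a by exact: bigmax_ge_id.
have b1 : b <= 1 by exact: bigmin_le_id.
exists ((a + b) / 2); split.
- lra.
- lra.
- apply/esym/negbTE; apply/negP => /eqP; lra.
move=> y Dy.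
have := neq y Dy; rewrite neq_lt => /orP [hy|hy].
- have PAy : PA y by rewrite /= Dy hy.
  have wa : frac (w y) <= a by exact: le_bigmax_cond.
  rewrite (ltW hy) (leNgt (frac (p z))) hy /=; split; apply/esym; last apply/negbTE; first (apply/idP; lra).
  apply/negP; lra.
- have PBy : PB y by rewrite /= Dy hy.
  have wb : b <= frac (w y) by exact: bigmin_le_cond.
  rewrite (ltW hy) (leNgt (frac (p y))) hy /=; split; apply/esym; first apply/negbTE; last (apply/idP; lra).
  apply/negP; lra.
Qed.

End Step.

Section Ind.
Variable R : realType.
Local Notation frac := (@Defs.frac R).
Local Open Scope ring_scope.
Variable X : finType.
Variable p : X -> R.
Local Notation Inv := (@Inv R X p).

Lemma floor_kt (k : int) (t : R) : 0 <= t -> t < 1 -> Num.floor (k%:~R + t) = k.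
Proof.
move=> t0 t1; apply/eqP; rewrite floor_eq intrD1; apply/andP; split; lra.
Qed.

Lemma frac_kt (k : int) (t : R) : 0 <= t -> t < 1 -> frac (k%:~R + t) = t.
Proof. by move=> t0 t1; rewrite /Defs.frac floor_kt // addrC addKr. Qed.

Lemma Inv_mono (w : X -> R) (D D' : pred X) :
  (forall y, D' y -> D y) -> Inv w D -> Inv w D'.
Proof.
by move=> h [I1 I2]; split; [move=> z /h; exact: I1 | move=> y z /h Dy /h Dz; exact: I2].
Qed.

Lemma ind_w (w0 : X -> R) (D0 : pred X) (s : seq X) : Inv w0 D0 ->
  exists w : X -> R, (forall y, y \notin s -> w y = w0 y) /\
     Inv w [pred y | D0 y || (y \in s)].
Proof.
move=> I0; elim: s => [|z s [w [Hag Hinv]]].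
  exists w0; split => //; apply: Inv_mono I0 => y /=; by rewrite in_nil orbF.
pose D := [pred y | D0 y || (y \in s)].
case: (boolP (D z)) => Dz.
  exists w; split.
    by move=> y; rewrite in_cons negb_or => /andP [_ ys]; exact: Hag.
  apply: Inv_mono Hinv => y /=; rewrite in_cons.
  case/orP => [->//|/orP [/eqP->|->]]; last by rewrite orbT.
  by [].
have [t [t0 t1 tz ht]] := @step_t R X p _ _ z Hinv.
pose w' := fun y => if y == z then (Num.floor (p z))%:~R + t else w y.
have w'z : w' z = (Num.floor (p z))%:~R + t by rewrite /w' eqxx.
have w'y : forall y, D y -> w' y = w y.
  move=> y Dy; rewrite /w'; case: eqP => // e; by move: Dz; rewrite -e Dy.
exists w'; split.
  move=> y; rewrite in_cons negb_or => /andP [yz ys].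
  by rewrite /w' (negbTE yz); exact: Hag.
have [I1 I2] := Hinv.
have E : forall y, (D0 y || (y \in z :: s)) -> y = z \/ D y.
  move=> y; rewrite in_cons; case/orP => [h|/orP [/eqP->|h]]; [right|left|right] => //.
  - by rewrite /= h.
  - by rewrite /= h orbT.
split.
  move=> y /E [->|Dy].
    by rewrite w'z floor_kt // frac_kt // tz.
  by rewrite w'y //; exact: I1.
move=> y y' /E [->|Dy] /E [->|Dy'].
- by rewrite !lexx.
- by rewrite w'z frac_kt // w'y //; exact: (proj2 (ht y' Dy')).
- by rewrite w'z frac_kt // w'y //; exact: (proj1 (ht y Dy)).
- by rewrite !w'y //; exact: I2.
Qed.

End Ind.

Section E.
Variable R : realType.
Local Notation frac := (@Defs.frac R).

Definition ecls (a : \bar R) : nat :=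
  match a with EFin _ => 0 | +oo => 1 | -oo => 2 end.

Lemma xsub_cls (a b a' b' : \bar R) : ecls a = ecls a' -> ecls b = ecls b' ->
  (ecls a != 0)%N || (ecls b != 0)%N -> xsub a b = xsub a' b'.
Proof. by case: a; case: a'; case: b; case: b'. Qed.

Lemma ecls_eq (a b : \bar R) : (a == +oo) = (b == +oo) -> (a == -oo) = (b == -oo) ->
  ecls a = ecls b.
Proof. by case: a; case: b. Qed.

Lemma ecls_fin (a : \bar R) : (a \is a fin_num) = (ecls a == 0)%N.
Proof. by case: a. Qed.

Lemma inf_cmp (r r' : R) (c : \bar R) : c = +oo \/ c = -oo ->
  (r%:E < c) = (r'%:E < c) /\ (r%:E <= c) = (r'%:E <= c).
Proof. by case => ->; rewrite ?ltry ?leey // !leeNy_eq !ltNge !leNye. Qed.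

Local Open Scope ring_scope.
Lemma G1 (a b : R) : Num.floor a = Num.floor b -> (frac a == 0) = (frac b == 0) ->
  forall c : int, (a < c%:~R)%R = (b < c%:~R)%R /\ (a <= c%:~R)%R = (b <= c%:~R)%R.
Proof.
move=> fe ze c.
have [ha1 ha2] := cmp_int (Num.floor a) c (frac_ge0 a) (frac_lt1 a).
have [hb1 hb2] := cmp_int (Num.floor b) c (frac_ge0 b) (frac_lt1 b).
rewrite -!frac_dec in ha1 ha2 hb1 hb2.
by rewrite ha1 ha2 hb1 hb2 fe ze.
Qed.

Lemma G2 (a b a' b' : R) : Num.floor a = Num.floor a' -> Num.floor b = Num.floor b' ->
  (frac a <= frac b)%R = (frac a' <= frac b')%R ->
  (frac b <= frac a)%R = (frac b' <= frac a')%R ->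
  forall c : int, (a - b < c%:~R)%R = (a' - b' < c%:~R)%R /\
                  (a - b <= c%:~R)%R = (a' - b' <= c%:~R)%R.
Proof.
move=> fa fb e1 e2 c.
have [h1 h2] := cmp_diff (Num.floor a) (Num.floor b) c (frac_ge0 a) (frac_lt1 a) (frac_ge0 b) (frac_lt1 b).
have [h1' h2'] := cmp_diff (Num.floor a') (Num.floor b') c (frac_ge0 a') (frac_lt1 a') (frac_ge0 b') (frac_lt1 b').
rewrite -!frac_dec in h1 h2 h1' h2'.
by rewrite h1 h2 h1' h2' fa fb e1 !ltNge e2.
Qed.

Lemma frac0E (a : R) : (frac a == 0%R) = (a <= (Num.floor a)%:~R)%R.
Proof.
have := floor_le a; rewrite /Defs.frac subr_eq0 => h.
by rewrite eq_le h andbT.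
Qed.

Lemma fracleE (a b : R) : (frac a <= frac b)%R = (a - b <= (Num.floor a - Num.floor b)%:~R)%R.
Proof.
rewrite /Defs.frac intrB; apply/idP/idP => h; lra.
Qed.

Lemma norm_bound (c : int) (M : nat) : (`|c| <= M%:Z)%R ->
  (- (M%:R) <= (c%:~R : R))%R /\ ((c%:~R : R) <= M%:R)%R.
Proof.
rewrite ler_norml => /andP [h1 h2]; split.
- by rewrite -[M%:R]/((M%:Z)%:~R : R) -intrN ler_int.
- by rewrite -[M%:R]/((M%:Z)%:~R : R) ler_int.
Qed.

End E.

Section FB.
Variable R : realType.
Local Open Scope ring_scope.

Lemma floor_bound (a : R) (M : nat) : - (M%:R) <= a -> a <= M%:R ->
  (`|Num.floor a| <= M%:Z)%R.
Proof.
move=> h1 h2; rewrite ler_norml; apply/andP; split.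
- by rewrite floor_ge_int intrN.
- have := floor_le a => h3.
  by rewrite -(ler_int R) [X in _ <= X]/=; apply: le_trans h3 h2.
Qed.

Lemma floor_same (a b : R) (M : nat) : - (M%:R) <= a -> a <= M%:R ->
  - (M%:R) <= b -> b <= M%:R ->
  (forall c : int, (`|c| <= M%:Z)%R -> (a < c%:~R) = (b < c%:~R)) ->
  Num.floor a = Num.floor b.
Proof.
have key : forall a b : R, - (M%:R) <= b -> b <= M%:R ->
    (forall c : int, (`|c| <= M%:Z)%R -> (a < c%:~R) = (b < c%:~R)) ->
    ~ (Num.floor a < Num.floor b)%R.
  move=> a' b' h1 h2 h hlt.
  have := h _ (floor_bound h1 h2).
  by rewrite -!floor_lt_int hlt ltxx.
move=> a1 a2 b1 b2 h.
case: (ltgtP (Num.floor a) (Num.floor b)) => // hlt.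
- by exfalso; apply: (key a b b1 b2 h hlt).
- by exfalso; apply: (key b a a1 a2 (fun c hc => esym (h c hc)) hlt).
Qed.

End FB.

Section Far.
Variable R : realType.
Local Open Scope ring_scope.
Lemma far (u u' : R) (c : int) (M : nat) : (`|c| <= M%:Z)%R ->
  (M%:R + M%:R < u /\ M%:R + M%:R < u') \/ (u < - (M%:R + M%:R) /\ u' < - (M%:R + M%:R)) ->
  (u < c%:~R) = (u' < c%:~R) /\ (u <= c%:~R) = (u' <= c%:~R).
Proof.
move=> hc; have [h1 h2] := @norm_bound R c M hc.
by case=> [[a b]|[a b]]; split; apply/idP/idP => h; lra.
Qed.
End Far.

From mathcomp Require Import zify.

Theorem lemma10 (R : realType) (X : finType) (isF : pred X) (M : nat)
    (v1 v2 : X -> \bar R) :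
  (0 < #|X|)%N ->
  valuation isF v1 -> valuation isF v2 ->
  simM M v1 v2 ->
  exists v2' : X -> \bar R,
    valuation isF v2' /\
    (forall x, - (M%:R)%:E <= v1 x -> v2' x = v2 x) /\
    approxM M v1 v2'.
Proof.
move=> Xpos V1 V2 [S1 S2].
set n := #|X| in Xpos S1 S2.
have thrM : forall c : \bar R, thr_abs M c -> thr_abs (n * M) c.
  move=> c [->|[->|[z [-> hz]]]]; [by left|by right; left|right; right; exists z; split=>//].
  nia.
have thrM2 : forall c : \bar R, thr_abs M c -> thr_abs (n.+1 * M) c.
  move=> c [->|[->|[z [-> hz]]]]; [by left|by right; left|right; right; exists z; split=>//].
  nia.
have thr2M : forall z : int, (`|z| <= (M + M)%:Z)%R -> thr_abs (n.+1 * M) ((z%:~R : R))%:E.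
  move=> z hz; right; right; exists z; split => //; nia.
have thrI : forall z : int, (`|z| <= M%:Z)%R -> thr_abs M ((z%:~R : R))%:E.
  by move=> z hz; right; right; exists z.
have Fp : forall z, (v1 z == +oo) = (v2 z == +oo).
  move=> z; have [h _] := S1 z +oo (or_introl erefl).
  by rewrite !ltey in h; apply: negb_inj.
have Fn : forall z, (v1 z == -oo) = (v2 z == -oo).
  move=> z; have [_ h] := S1 z -oo (or_intror (or_introl erefl)).
  by rewrite !leeNy_eq in h.
have Fc : forall z, ecls (v1 z) = ecls (v2 z) by move=> z; apply: ecls_eq.
pose m : R := M%:R.
have mE : m = (M%:Z)%:~R by [].
have S1i : forall z (c : int), (`|c| <= M%:Z)%R ->
   (v1 z < (c%:~R)%:E) = (v2 z < (c%:~R)%:E) /\ (v1 z <= (c%:~R)%:E) = (v2 z <= (c%:~R)%:E).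
  by move=> z c hc; apply: S1; apply: thrM; apply: thrI.
have S1r : forall z (a b : R), v1 z = a%:E -> v2 z = b%:E -> forall c : int, (`|c| <= M%:Z)%R ->
   (a < c%:~R)%R = (b < c%:~R)%R /\ (a <= c%:~R)%R = (b <= c%:~R)%R.
  by move=> z a b E1 E2 c hc; have := S1i z c hc; rewrite E1 E2 !lte_fin !lee_fin.
have S2r : forall y z (ay az b_y bz : R), v1 y = ay%:E -> v1 z = az%:E ->
   v2 y = b_y%:E -> v2 z = bz%:E -> forall c : int, (`|c| <= (M + M)%:Z)%R ->
   (ay - az < c%:~R)%R = (b_y - bz < c%:~R)%R /\ (ay - az <= c%:~R)%R = (b_y - bz <= c%:~R)%R.
  move=> y z ay az b_y bz E1 E2 E3 E4 c hc; have := S2 y z _ (thr2M c hc).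
  by rewrite E1 E2 E3 E4 /xsub /xadd /= !lte_fin !lee_fin.
pose p := fun z => fine (v1 z).
pose Lb := fun z => - (M%:R)%:E <= v1 z.
pose D0 := [pred z | Lb z && (v1 z <= (M%:R)%:E)].
have D0fin : forall z, D0 z -> [/\ v1 z = (p z)%:E, v2 z = (fine (v2 z))%:E,
     (- m <= p z)%R, (p z <= m)%R & (- m <= fine (v2 z))%R /\ (fine (v2 z) <= m)%R].
  move=> z /andP []; rewrite /Lb /p.
  have := Fc z; case E1: (v1 z) => [a| |] //=.
  case E2: (v2 z) => [b| |] // _ h1 h2 /=.
  rewrite !lee_fin in h1 h2.
  have [l1 _] := S1r z a b E1 E2 (- (M%:Z))%R ltac:(by rewrite normrN).
  have [_ l2] := S1r z a b E1 E2 (M%:Z) ltac:(by []).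
  rewrite intrN -mE in l1; rewrite -mE in l2.
  split => //; split.
    by rewrite leNgt -l1 -leNgt.
  by rewrite -l2.
have fe0 : forall z, D0 z -> Num.floor (p z) = Num.floor (fine (v2 z)).
  move=> z Dz; have [E1 E2 a1 a2 [b1 b2]] := D0fin z Dz.
  apply: (floor_same (M:=M)) => // c hc; exact: (S1r z _ _ E1 E2 c hc).1.
have I0 : Inv p (fun z => fine (v2 z)) D0.
  split.
    move=> z Dz; have [E1 E2 a1 a2 [b1 b2]] := D0fin z Dz.
    split; first by rewrite fe0.
    rewrite !frac0E -fe0 //.
    exact: esym (S1r z _ _ E1 E2 _ (floor_bound a1 a2)).2.
  move=> y z Dy Dz; rewrite !fracleE -fe0 // -fe0 //.
  have [E1 E2 a1 a2 [b1 b2]] := D0fin y Dy.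
  have [E1' E2' a1' a2' [b1' b2']] := D0fin z Dz.
  have h1 := floor_bound a1 a2; have h2 := floor_bound a1' a2'.
  have hc : (`|Num.floor (p y) - Num.floor (p z)| <= (M + M)%:Z)%R by lia.
  exact: (S2r y z _ _ _ _ E1 E1' E2 E2' _ hc).2.
pose Rel := fun z => (v1 z \is a fin_num) && (v1 z <= (M%:R)%:E).
pose s := enum [pred z | Rel z && ~~ Lb z].
have [w [Hag Hinv]] := ind_w s I0.
have wL : forall z, Lb z -> w z = fine (v2 z).
  by move=> z Lz; apply: Hag; rewrite mem_enum inE Lz andbF.
have IR : Inv p w Rel.
  apply: Inv_mono Hinv => z /andP [f hM] /=.
  case: (boolP (Lb z)) => Lz; first by rewrite hM.
  by rewrite mem_enum inE Lz andbT /Rel f hM.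
have [IR1 IR2] := IR.
pose v2' := fun z => if Lb z then v2 z else if v1 z \is a fin_num then (w z)%:E else v1 z.
have v2'L : forall z, Lb z -> v2' z = v2 z by move=> z Lz; rewrite /v2' Lz.
have Relw : forall z, Rel z -> v1 z = (p z)%:E /\ v2' z = (w z)%:E.
  move=> z /andP [f hM]; split; first by rewrite /p fineK.
  rewrite /v2'; case: ifP => Lz; last by rewrite f.
  have f2 : v2 z \is a fin_num by rewrite ecls_fin -Fc -ecls_fin.
  by rewrite wL // fineK.
have clsv2' : forall z, ecls (v2' z) = ecls (v1 z).
  move=> z; rewrite /v2'; case: ifP => _; first by rewrite Fc.
  case: ifP => f //; by move: f; rewrite ecls_fin => /eqP ->.
have G1z : forall z, Rel z -> forall c : int,
    (p z < c%:~R)%R = (w z < c%:~R)%R /\ (p z <= c%:~R)%R = (w z <= c%:~R)%R.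
  move=> z Rz; have [a b] := IR1 z Rz; apply: G1 => //.
have nonL : forall z, ~~ Lb z -> v1 z < - (M%:R)%:E by move=> z; rewrite /Lb -ltNge.
have nonLw : forall z, ~~ Lb z -> v1 z \is a fin_num -> Rel z /\ (w z < - m)%R /\ (p z < - m)%R.
  move=> z Lz f.
  have hz := nonL z Lz.
  have Rz : Rel z.
    rewrite /Rel f /=; apply: ltW; apply: lt_le_trans hz _.
    rewrite lee_fin; have : (0 <= m)%R by rewrite /m ler0n.
    move=> h; lra.
  split => //; have [E1 _] := Relw z Rz.
  rewrite E1 lte_fin in hz.
  have := (G1z z Rz (- (M%:Z))%R).1; rewrite intrN -mE => <-; by split.
have m0 : (0 <= m)%R by rewrite /m ler0n.
exists v2'; split; last split.
- move=> z; case: (boolP (Lb z)) => Lz.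
    by rewrite v2'L //; exact: V2.
  rewrite /v2' (negbTE Lz).
  have := V1 z; case: (isF z) => h.
    case: (boolP (v1 z \is a fin_num)) => f //.
    have [_ [h' _]] := nonLw z Lz f.
    rewrite lee_fin; lra.
  exfalso; move: Lz; rewrite /Lb; apply/negP; rewrite negbK; apply: (le_trans _ h).
  by rewrite lee_fin; lra.
- exact: v2'L.
move=> x y; split; [|split].
-
  move=> c hc.
  case: (boolP (Lb x)) => Lx.
    rewrite v2'L //.
    case: hc => [->|[->|[z [-> hz]]]].
    + by apply: (S1 x); left.
    + by apply: (S1 x); right; left.
    case: (ltP z (- (M%:Z))%R) => hz2; last first.
      by apply: S1i; rewrite ler_norml hz2 hz.
    have hzM : ((z%:~R : R))%:E < - (M%:R)%:E.
      by rewrite lte_fin -[M%:R]/((M%:Z)%:~R : R) -intrN ltr_int.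
    have L2 : - (M%:R)%:E <= v2 x.
      have [l1 _] := S1i x (- (M%:Z))%R ltac:(by rewrite normrN).
      rewrite intrN EFinN in l1.
      by move: Lx; rewrite /Lb !leNgt l1.
    have F : forall a : \bar R, - (M%:R)%:E <= a -> (a < (z%:~R)%:E) = false /\ (a <= (z%:~R)%:E) = false.
      move=> a ha; split; apply/negbTE; rewrite -?leNgt -?ltNge.
        exact: le_trans (ltW hzM) ha.
      exact: lt_le_trans hzM ha.
    by have [-> ->] := F _ Lx; have [-> ->] := F _ L2.
  case: (boolP (v1 x \is a fin_num)) => f; last first.
    by rewrite /v2' (negbTE Lx) (negbTE f).
  have [Rx _] := nonLw x Lx f.
  have [E1 E2] := Relw x Rx; rewrite E1 E2.
  case: hc => [->|[->|[z [-> hz]]]].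
  + by apply: inf_cmp; left.
  + by apply: inf_cmp; right.
  by rewrite !lte_fin !lee_fin; apply: G1z.
-
  move=> c hc.
  case: (boolP ((ecls (v1 x) != 0)%N || (ecls (v1 y) != 0)%N)) => hcls.
    have -> : xsub (v2' x) (v2' y) = xsub (v1 x) (v1 y).
      by apply: xsub_cls; rewrite ?clsv2'.
    by [].
  move: hcls; rewrite negb_or !negbK -!ecls_fin => /andP [fx fy].
  case: (boolP (Lb x && Lb y)) => LL.
    case/andP: LL => Lx Ly; rewrite !v2'L //.
    exact: S2 x y c (thrM2 c hc).
  have Rfin : forall z, v1 z \is a fin_num -> ~~ Rel z -> Lb z /\ (M%:R)%:E < v1 z.
    move=> z fz; rewrite /Rel fz /= -ltNge => h; split => //.
    rewrite /Lb; apply: ltW; apply: le_lt_trans h; rewrite lee_fin; lra.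
  have Rv2 : forall z, v1 z \is a fin_num -> ~~ Rel z ->
      v1 z = (p z)%:E /\ v2' z = (fine (v2 z))%:E /\ (m < p z)%R /\ (m < fine (v2 z))%R.
    move=> z fz nR; have [Lz hz] := Rfin z fz nR.
    have f2 : v2 z \is a fin_num by rewrite ecls_fin -Fc -ecls_fin.
    have E1 : v1 z = (p z)%:E by rewrite /p fineK.
    have E2 : v2 z = (fine (v2 z))%:E by rewrite fineK.
    rewrite v2'L // -E2; split => //; split => //.
    rewrite E1 lte_fin in hz; split => //.
    have [_ l2] := S1r z _ _ E1 E2 (M%:Z) ltac:(by []).
    rewrite -mE in l2.
    by move: hz; rewrite !ltNge l2.
  case: (boolP (Rel x && Rel y)) => RR.
    case/andP: RR => Rx Ry.
    have [E1 E2] := Relw x Rx; have [E3 E4] := Relw y Ry.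
    rewrite E1 E2 E3 E4 /xsub /xadd /=.
    case: hc => [->|[->|[z [-> hz]]]].
    + by apply: inf_cmp; left.
    + by apply: inf_cmp; right.
    rewrite !lte_fin !lee_fin; apply: G2.
    * by rewrite (proj1 (IR1 x Rx)).
    * by rewrite (proj1 (IR1 y Ry)).
    * exact: IR2.
    * exact: IR2.
  move: RR; rewrite negb_and => /orP [nR|nR].
  + have [Lx _] := Rfin x fx nR.
    have Ly : ~~ Lb y by move: LL; rewrite Lx.
    have [Ry [wy py]] := nonLw y Ly fy.
    have [E1 [E2 [a1 a2]]] := Rv2 x fx nR.
    have [E3 E4] := Relw y Ry.
    rewrite E1 E2 E3 E4 /xsub /xadd /=.
    case: hc => [->|[->|[z [-> hz]]]].
    * by apply: inf_cmp; left.
    * by apply: inf_cmp; right.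
    rewrite !lte_fin !lee_fin; apply: (@far R _ _ z M hz); left; split; lra.
  + have [Ly _] := Rfin y fy nR.
    have Lx : ~~ Lb x by move: LL; rewrite Ly andbT.
    have [Rx [wx px]] := nonLw x Lx fx.
    have [E1 [E2 [a1 a2]]] := Rv2 y fy nR.
    have [E3 E4] := Relw x Rx.
    rewrite E1 E2 E3 E4 /xsub /xadd /=.
    case: hc => [->|[->|[z [-> hz]]]].
    * by apply: inf_cmp; left.
    * by apply: inf_cmp; right.
    rewrite !lte_fin !lee_fin; apply: (@far R _ _ z M hz); right; split; lra.
-
  have RelI : forall z, -oo < v1 z -> v1 z <= (M%:R)%:E -> Rel z.
    by move=> z; rewrite /Rel; case: (v1 z) => // r _ ->.
  move=> h1 h2 h3 h4.
  have Rx := RelI x h1 h2; have Ry := RelI y h3 h4.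
  have [_ E2] := Relw x Rx; have [_ E4] := Relw y Ry.
  rewrite E2 E4 /=; exact: IR2.
Qed.
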